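(* Let $X$ be a locally compact Hausdorff space. In the category $\mathrm{SUM}(X)$, the one-point compactification $X+_{f_\infty}\{\infty\}$, where $f_\infty(F)=\emptyset$ if $F$ is compact and $f_\infty(F)=\{\infty\}$ otherwise, is a terminal object.
   Context: $\mathrm{Closed}(A)$ is the set of closed subsets of $A$; an admissible map $f:\mathrm{Closed}(X)\to\mathrm{Closed}(Y)$ satisfies $f(\emptyset)=\emptyset$ and preserves finite unions; $X+_fY$ is $X\sqcup Y$ with closed sets the $D$ such that $D\cap X$ is closed in $X$, $D\cap Y$ closed in $Y$ and $f(D\cap X)\subseteq D$. $\mathrm{SUM}(X)$ is the category whose objects are Hausdorff spaces of the form $X+_fY$ and whose morphisms are continuous maps of the form $\mathrm{id}+\phi:X+_{f_1}Y_1\to X+_{f_2}Y_2$ (identity on $X$, $\phi:Y_1\to Y_2$ on the remainders). *)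

(* Defs.v *)
From mathcomp Require Import all_boot all_classical all_reals all_analysis.
Set Implicit Arguments. Unset Strict Implicit. Unset Printing Implicit Defensive.
Local Open Scope classical_set_scope.

(* The remainder Y is described by its family of closed sets [clY].
   For a topologicalType Y we use [closed]; for the one-point space {oo}
   (the type unit) every subset is closed. *)

(* admissible map Closed(X) -> Closed(Y): only values on closed sets matter *)
Definition admissible (X : topologicalType) (Y : Type) (clY : set Y -> Prop)
  (f : set X -> set Y) : Prop :=
  [/\ (forall A, closed A -> clY (f A)),
      f set0 = set0 &
      forall A B, closed A -> closed B -> f (A `|` B) = f A `|` f B].

Definition sum_closed (X : topologicalType) (Y : Type) (clY : set Y -> Prop)
  (f : set X -> set Y) (D : set (X + Y)) : Prop :=
  [/\ closed (inl @^-1` D), clY (inr @^-1` D) & f (inl @^-1` D) `<=` inr @^-1` D].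

Definition sum_open (X : topologicalType) (Y : Type) (clY : set Y -> Prop)
  (f : set X -> set Y) (U : set (X + Y)) : Prop := sum_closed clY f (~` U).

Definition sum_hausdorff (X : topologicalType) (Y : Type) (clY : set Y -> Prop)
  (f : set X -> set Y) : Prop :=
  forall p q : X + Y, p <> q -> exists U V : set (X + Y),
    [/\ sum_open clY f U, sum_open clY f V, U p, V q & U `&` V = set0].

Definition SUM_object (X : topologicalType) (Y : Type) (clY : set Y -> Prop)
  (f : set X -> set Y) : Prop := admissible clY f /\ sum_hausdorff clY f.

Definition id_plus (X Y1 Y2 : Type) (phi : Y1 -> Y2) (p : X + Y1) : X + Y2 :=
  match p with inl x => inl x | inr y => inr (phi y) end.

Definition SUM_morphism (X : topologicalType) (Y1 Y2 : Type)
  (cl1 : set Y1 -> Prop) (f1 : set X -> set Y1)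
  (cl2 : set Y2 -> Prop) (f2 : set X -> set Y2) (phi : Y1 -> Y2) : Prop :=
  forall D, sum_closed cl2 f2 D -> sum_closed cl1 f1 (id_plus phi @^-1` D).

Definition cl_pt : set unit -> Prop := fun _ => True.
Definition f_infty (X : topologicalType) (F : set X) : set unit :=
  if `[< compact F >] then set0 else setT.

(* Main.v *)
Require Import Defs.
From mathcomp Require Import all_boot all_classical all_reals all_analysis.
Local Open Scope classical_set_scope.

Section Helpers.
Context {X : topologicalType}.

Lemma adm_mono {Y : Type} {clY : set Y -> Prop} {f : set X -> set Y} :
  admissible clY f -> forall {A B}, closed A -> closed B -> A `<=` B -> f A `<=` f B.
Proof.
move=> [_ _ fU] A B cA cB AB.
have -> : B = A `|` B by rewrite setUidr.
by rewrite fU //; exact: subsetUl.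
Qed.

Lemma key_compact {Y : topologicalType} {f : set X -> set Y} :
  hausdorff_space X -> SUM_object (@closed Y) f ->
  forall {K}, compact K -> f K = set0.
Proof.
move=> hX [adf hs] K cK; have clK := compact_closed hX cK.
apply/seteqP; split => // y fKy; exfalso.
pose D := [set V : set (X + Y) | sum_open (@closed Y) f V /\ V (inr y)].
pose B := fun V : set (X + Y) => K `&` inl @^-1` V.
have [prop|] := pselect (forall V, D V -> B V !=set0); last first.
  move=> /existsNP [V /not_implyP [[[c1 _ c3] Vy] nB]].
  have KC : K `<=` inl @^-1` (~` V).
    by move=> x Kx Vx; apply: nB; exists x.
  have := adm_mono adf clK c1 KC _ fKy.
  by move=> /c3.
have DT : D setT.
  split=> //; split.
  - by rewrite setCT preimage_set0; exact: closed0.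
  - by rewrite setCT preimage_set0; exact: closed0.
  - by rewrite setCT preimage_set0; case: adf => _ -> _.
have FF : Filter (filter_from D B).
  apply: filter_from_filter; first by exists setT.
  move=> V1 V2 [[a1 b1 c1] v1] [[a2 b2 c2] v2]; exists (V1 `&` V2).
    split=> //; split.
    - by rewrite /sum_open setCI preimage_setU; exact: closedU.
    - by rewrite /sum_open setCI preimage_setU; exact: closedU.
    - rewrite /sum_open setCI !preimage_setU.
      case: adf => _ _ ->//.
      by move=> z [/c1|/c2]; [left|right].
  by move=> x [Kx [V1x V2x]]; split; split.
have PF := filter_from_proper FF prop.
have FK : filter_from D B K by exists setT => // x [].
have [x [Kx clx]] := cK _ PF FK.
have nxy : inl x <> inr y :> (X + Y) by [].
have [U [V [[a1 b1 c1] [a2 b2 c2] Ux Vy UV]]] := hs _ _ nxy.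
have DV : D V by split => //; split.
have nU : nbhs x (inl @^-1` U).
  apply: open_nbhs_nbhs; split => //.
  by rewrite -[inl @^-1` U]setCK; exact: closed_openC.
have FV : filter_from D B (B V) by exists V.
have [z [[_ Vz] Uz]] := clx (B V) (inl @^-1` U) FV nU.
have : (U `&` V) (inl z) by [].
by rewrite UV.
Qed.

Definition liftL (A : set X) : set (X + unit) :=
  fun p => match p with inl x => A x | inr _ => False end.
Definition liftT (A : set X) : set (X + unit) :=
  fun p => match p with inl x => A x | inr _ => True end.

Lemma liftL_open A : open A -> sum_open cl_pt (@f_infty X) (liftL A).
Proof.
move=> oA; split => //; first exact: open_closedC.
by move=> _ _ [].
Qed.

End Helpers.

Theorem mainTheorem15 (X : topologicalType) (hX : hausdorff_space X)
  (lcX : locally_compact [set: X]) :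
  SUM_object cl_pt (@f_infty X) /\
  forall (Y : topologicalType) (f : set X -> set Y),
    SUM_object (@closed Y) f ->
    exists! phi : Y -> unit,
      SUM_morphism (@closed Y) f cl_pt (@f_infty X) phi.
Proof.
have adm : admissible cl_pt (@f_infty X).
  split => //; first by rewrite /f_infty asboolT //; exact: compact0.
  move=> A B cA cB; rewrite /f_infty.
  have [cpA|ncA] := pselect (compact A); last first.
    rewrite (asboolF ncA) asboolF ?setTU //.
    by move=> cAB; apply: ncA; apply: (subclosed_compact cA cAB); exact: subsetUl.
  have [cpB|ncB] := pselect (compact B); last first.
    rewrite (asboolF ncB) asboolF ?setUT //.
    by move=> cAB; apply: ncB; apply: (subclosed_compact cB cAB); exact: subsetUr.
  by rewrite !asboolT ?setU0 //; exact: compactU.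
split.
  split => //.
  have oneside : forall a : X, exists U V : set (X + unit),
      [/\ sum_open cl_pt (@f_infty X) U, sum_open cl_pt (@f_infty X) V,
       U (inl a), V (inr tt) & U `&` V = set0].
    move=> a; have [K nK [cpK clK]] := lcX a I.
    rewrite withinET in nK.
    move: nK; rewrite nbhsE => -[W [oW Wa] WK].
    exists (liftL W), (liftT (~` K)); split => //.
    - exact: liftL_open.
    - split => //.
      + by rewrite /liftT /=; change (closed (~` ~` K)); rewrite setCK.
      + change (f_infty (~` ~` K) `<=` fun _ : unit => ~ True).
        by rewrite setCK /f_infty asboolT.
    - apply/seteqP; split => // -[x|[]] [] //= Wx nKx; apply: nKx; exact: WK.
  move=> [a|[]] [b|[]] pq.
  - have h := hX; rewrite open_hausdorff in h.
    have /h [[A B] [/= /set_mem Aa /set_mem Bb] [/= oA oB /eqP AB]] : a != b.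
      by apply/eqP => ab; apply: pq; rewrite ab.
    exists (liftL A), (liftL B); split => //; try exact: liftL_open.
    apply/seteqP; split => // -[x|[]] [] //= Ax Bx.
    by have : (A `&` B) x by []; rewrite AB.
  - exact: oneside.
  - have [U [V [oU oV Ua Vb UV]]] := oneside b.
    by exists V, U; split => //; rewrite setIC.
  - by exfalso; apply: pq.
move=> Y f sY; exists (fun _ => tt); split; last first.
  by move=> phi _; apply: funext => y; case: (phi y).
move=> D [clD _ fD]; split => //.
  have [Dt|nDt] := pselect (D (inr tt)).
    have -> : inr @^-1` (id_plus (fun=> tt) @^-1` D) = [set: Y].
      by apply/seteqP; split.
    exact: closedT.
  have -> : inr @^-1` (id_plus (fun=> tt) @^-1` D) = set0 :> set Y.
    by apply/seteqP; split.
  exact: closed0.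
have [Dt|nDt] := pselect (D (inr tt)); first by move=> y _.
have cp : compact (inl @^-1` D : set X).
  apply: contrapT => nc; apply: nDt; apply: (fD tt).
  by rewrite /f_infty asboolF.
change (f (inl @^-1` D) `<=` inr @^-1` (id_plus (fun=> tt) @^-1` D)).
by rewrite (key_compact hX sY cp).
Qed.
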